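(* Let $e,c,h\in\omega^\omega$ with $e$ nondecreasing and unbounded and $c(n)\ge1$ for all $n$. Let $\langle I_n:n\in\omega\rangle$ be the partition of $\omega$ into consecutive intervals with $|I_n|=h(n)$, and define $g_{c,h}\in\omega^\omega$ by $g_{c,h}(k)=\lfloor\log_2c(n)\rfloor$ whenever $k\in I_n$. Suppose $e(g_{c,h}(n))\ge2\log_2n$ for all $n\ge1$. Then $\mathfrak{v}^\exists_{c,h}\le\operatorname{non}(\mathcal{N}^{e^*})$ and $\operatorname{cov}(\mathcal{N}^{e^*})\le\mathfrak{c}^\exists_{c,h}$.
   Context: $2^\omega$ carries the metric $d(x,y)=2^{-\min\{n:x(n)\neq y(n)\}}$ for $x\neq y$ and $d(x,x)=0$. A gauge function is a nondecreasing $f\colon[0,\infty)\to[0,\infty)$ with $f(0)=0$, $\lim_{x\to0}f(x)=0$; $\mathcal{H}^f(A)=\lim_{\delta\to0}\inf\{\sum_nf(\operatorname{diam}C_n):A\subseteq\bigcup_nC_n,\ \operatorname{diam}C_n\le\delta\}$ and $\mathcal{N}^f=\{A\subseteq2^\omega:\mathcal{H}^f(A)=0\}$. For nondecreasing unbounded $e\in\omega^\omega$, $e^*$ is the gauge function with $e^*(0)=0$, $e^*(2^{-k})=2^{-e(k)}$ for all $k\in\omega$, linear on each interval $[2^{-k-1},2^{-k}]$ (and constant on $[1,\infty)$). For $c,h\in\omega^\omega$: $\prod c=\prod_n c(n)$ (each $c(n)=\{0,\dots,c(n)-1\}$), $S(c,h)=\prod_n[c(n)]^{\le h(n)}$ (sequences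 $\phi$ with $\phi(n)\subseteq c(n)$, $|\phi(n)|\le h(n)$), and $x\in^\infty\phi$ iff $x(n)\in\phi(n)$ for infinitely many $n$. $\mathfrak{c}^\exists_{c,h}$ is the least size of $\Phi\subseteq S(c,h)$ such that every $x\in\prod c$ satisfies $x\in^\infty\phi$ for some $\phi\in\Phi$; $\mathfrak{v}^\exists_{c,h}$ is the least size of $F\subseteq\prod c$ such that for every $\phi\in S(c,h)$ some $x\in F$ fails $x\in^\infty\phi$. $\operatorname{cov}(I)$ is the least size of a subfamily of $I$ covering $2^\omega$, $\operatorname{non}(I)$ the least size of a subset of $2^\omega$ not in $I$. *)

(* Defs.v *)
From HB Require Import structures.
From mathcomp Require Import all_boot all_order all_algebra.
From mathcomp Require Import all_classical all_reals all_analysis.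
Set Implicit Arguments. Unset Strict Implicit. Unset Printing Implicit Defensive.
Import Order.TTheory GRing.Theory Num.Theory.
Import numFieldNormedType.Exports.
Local Open Scope classical_set_scope.
Local Open Scope ring_scope.

Definition cantor := nat -> bool.

Section Hausdorff.
Variable R : realType.

Definition cdist (x y : cantor) : R :=
  match pselect (exists n, x n != y n) with
  | left H => (2%:R ^- (ex_minn H))
  | right _ => 0
  end.

(* diameter; sup of the empty set is 0 *)
Definition cdiam (C : set cantor) : R :=
  sup [set r | exists x y, C x /\ C y /\ r = cdist x y].

Definition hausdorff_delta (f : R -> R) (delta : R) (A : set cantor) : \bar R :=
  ereal_inf [set (\sum_(0 <= n <oo) (f (cdiam (C n)))%:E)%E |
               C in [set C : nat -> set cantor |
                      A `<=` \bigcup_n C n /\ forall n, cdiam (C n) <= delta]].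

Definition hausdorff (f : R -> R) (A : set cantor) : \bar R :=
  lim (hausdorff_delta f delta A @[delta --> 0^'+]).

Definition hnull (f : R -> R) (A : set cantor) : Prop := hausdorff f A = 0%E.

(* the index k with 2^{-k-1} < t <= 2^{-k} (for 0 < t < 1) *)
Definition dyadic_index (t : R) : nat :=
  match pselect (exists k, (2%:R ^- k.+1 < t)) with
  | left H => ex_minn H
  | right _ => 0%N
  end.

(* e^*: e^*(0)=0, e^*(2^{-k}) = 2^{-e(k)}, linear on [2^{-k-1},2^{-k}],
   constant on [1,oo) *)
Definition estar (e : nat -> nat) (t : R) : R :=
  if t <= 0 then 0
  else if 1 <= t then 2%:R ^- e 0%N
  else let k := dyadic_index t in
       2%:R ^- e k.+1
       + (t - 2%:R ^- k.+1) / (2%:R ^- k.+1) * (2%:R ^- e k - 2%:R ^- e k.+1).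

End Hausdorff.

Definition prodc (c : nat -> nat) := forall n, 'I_(c n).
Definition slalom (c : nat -> nat) := forall n, {set 'I_(c n)}.
Definition in_S (c h : nat -> nat) (phi : slalom c) : Prop :=
  forall n, (#|phi n| <= h n)%N.
Definition inf_often_in (c : nat -> nat) (x : prodc c) (phi : slalom c) : Prop :=
  forall m, exists n, (m <= n)%N /\ x n \in phi n.

(* intervals I_n = [sum_{i<n} h i, sum_{i<=n} h i) ; block_of h k = n with k in I_n *)
Definition block_of (h : nat -> nat) (k : nat) : nat :=
  match pselect (exists n, k < \sum_(i < n.+1) h i)%N with
  | left H => ex_minn H
  | right _ => 0%N
  end.
Definition gch (c h : nat -> nat) (k : nat) : nat := trunc_log 2 (c (block_of h k)).

(* Main.v *)
Require Import Defs.
From HB Require Import structures.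
From mathcomp Require Import all_boot all_order all_algebra.
From mathcomp Require Import all_classical all_reals all_analysis.
From mathcomp Require Import ring lra.
Import Order.TTheory GRing.Theory Num.Theory.
Local Open Scope classical_set_scope.
Local Open Scope ring_scope.

Lemma p2E (R : realType) (a : nat) : (2%:R : R) ^- a = ((2 ^ a)%N%:R)^-1.
Proof. by rewrite natrX. Qed.

Lemma p2_gt0 (R : realType) (a : nat) : 0 < (2%:R : R) ^- a.
Proof. by rewrite invr_gt0 exprn_gt0. Qed.

Lemma p2_lt (R : realType) (a b : nat) :
  ((2%:R : R) ^- a < 2%:R ^- b) = (b < a)%N.
Proof.
by rewrite !p2E ltf_pV2 ?ltr_nat ?ltn_exp2l // posrE ltr0n expn_gt0.
Qed.

Lemma p2_le (R : realType) (a b : nat) :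
  ((2%:R : R) ^- a <= 2%:R ^- b) = (b <= a)%N.
Proof.
by rewrite !p2E lef_pV2 ?ler_nat ?leq_exp2l // posrE ltr0n expn_gt0.
Qed.

Lemma dyadic_index_p2 (R : realType) (m : nat) :
  dyadic_index ((2%:R : R) ^- m) = m.
Proof.
rewrite /dyadic_index; case: pselect => [H|H]; last first.
  by exfalso; apply: H; exists m; rewrite p2_lt.
case: ex_minnP => k Hk Hmin.
apply/eqP; rewrite eqn_leq; apply/andP; split.
  by apply: Hmin; rewrite p2_lt.
by move: Hk; rewrite p2_lt.
Qed.

Lemma estar_p2 (R : realType) (e : nat -> nat) (m : nat) :
  estar e ((2%:R : R) ^- m) = 2%:R ^- e m.
Proof.
rewrite /estar leNgt p2_gt0 /=.
case: m => [|m].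
  by rewrite expr0 invr1 lexx.
have -> : (1 <= (2%:R : R) ^- m.+1) = false.
  have : (2%:R : R) ^- m.+1 < 2%:R ^- 0 by rewrite p2_lt.
  by rewrite expr0 invr1 => h; apply/negbTE; rewrite -ltNge.
rewrite dyadic_index_p2.
have h2 : (2%:R : R) ^- m.+1 = 2 * 2%:R ^- m.+2.
  by rewrite [in RHS]exprS invfM mulrA divff ?mul1r // pnatr_eq0.
rewrite h2.
have a0 : (2%:R : R) ^- m.+2 != 0 by rewrite gt_eqF // p2_gt0.
move: a0; set a := (2%:R : R) ^- m.+2 => a0.
have -> : (2 * a - a) / a = 1 by rewrite -{2}(mul1r a) -mulrBl mulrK ?unitfE //; lra.
by rewrite mul1r addrC subrK.
Qed.

Lemma estar_ge0 (R : realType) (e : nat -> nat) :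
  {homo e : m n / (m <= n)%N} -> forall t : R, 0 <= estar e t.
Proof.
move=> he t; rewrite /estar.
case: ifP => // /negbT; rewrite -ltNge => t0.
case: ifP => [_|/negbT]; first exact/ltW/p2_gt0.
rewrite -ltNge => t1.
rewrite /dyadic_index; case: pselect => [H|H]; last first.
  exfalso; apply: H.
  have tinv0 : 0 <= t^-1 by rewrite invr_ge0 ltW.
  exists (Num.Def.archi_bound t^-1).
  set k := Num.Def.archi_bound t^-1.
  have hk := archi_boundP tinv0.
  rewrite -[X in _ < X]invrK p2E ltf_pV2 ?posrE ?invr_gt0 ?ltr0n ?expn_gt0 //.
  apply: (lt_le_trans hk); rewrite ler_nat.
  by apply: ltnW; apply: (leq_trans (ltn_expl k (isT : 1 < 2)%N)); rewrite leq_exp2l.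
case: ex_minnP => k Hk _.
apply: addr_ge0; first exact/ltW/p2_gt0.
apply: mulr_ge0; first apply: divr_ge0.
- by rewrite subr_ge0 ltW.
- exact/ltW/p2_gt0.
- by rewrite subr_ge0 p2_le he.
Qed.
Definition flip (z : cantor) (m : nat) : cantor :=
  fun i => if i == m then ~~ z i else z i.

Lemma cdist_le (R : realType) (x y : cantor) (m : nat) :
  (forall i, (i < m)%N -> x i = y i) -> cdist R x y <= 2%:R ^- m.
Proof.
move=> hxy; rewrite /cdist; case: pselect => [H|_]; last exact/ltW/p2_gt0.
case: ex_minnP => k Hk _; rewrite p2_le leqNgt; apply/negP => km.
by move: Hk; rewrite hxy // eqxx.
Qed.

Lemma cdist_flip (R : realType) (x : cantor) (m : nat) :
  cdist R x (flip x m) = 2%:R ^- m.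
Proof.
rewrite /cdist; case: pselect => [H|H]; last first.
  by exfalso; apply: H; exists m; rewrite /flip eqxx; case: (x m).
case: ex_minnP => k Hk _; congr (_ ^- _).
by apply/eqP; move: Hk; rewrite /flip; case: (k =P m) => // _; rewrite eqxx.
Qed.

Lemma cdiam_cyl (R : realType) (C : set cantor) (m : nat) :
  C !=set0 ->
  (forall x y, C x -> C y -> forall i, (i < m)%N -> x i = y i) ->
  (forall x, C x -> C (flip x m)) ->
  cdiam R C = 2%:R ^- m.
Proof.
move=> [x0 Cx0] hagree hflip; rewrite /cdiam.
set E := [set r | _].
have ubE : ubound E (2%:R ^- m).
  by move=> r [x [y [Cx [Cy ->]]]]; apply: cdist_le; apply: hagree.
apply/eqP; rewrite eq_le; apply/andP; split.
  by apply: ge_sup => //; exists (cdist R x0 x0), x0, x0.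
have hs : has_ubound E by exists (2%:R ^- m).
apply: (ub_le_sup hs); exists x0, (flip x0 m); split => //; split; first exact: hflip.
by rewrite cdist_flip.
Qed.

Lemma cdiam_empty (R : realType) (C : set cantor) :
  (forall x, ~ C x) -> cdiam R C = 0.
Proof.
move=> hC; rewrite /cdiam.
rewrite (_ : [set r | _] = set0) ?sup0 //.
by apply/seteqP; split => r // [x [y [Cx _]]]; case: (hC x).
Qed.

Definition code (m : nat) (z : cantor) := enum_rank [ffun i : 'I_m => z i].

Lemma card_code m : #|{ffun 'I_m -> bool}| = (2 ^ m)%N.
Proof. by rewrite card_ffun card_bool card_ord. Qed.

Lemma code_le (c : nat -> nat) (hc : forall n, (1 <= c n)%N) n :
  (#|{ffun 'I_(trunc_log 2 (c n)) -> bool}| <= c n)%N.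
Proof. by rewrite card_code trunc_logP. Qed.
Arguments code_le {c}.

Definition Fz (c : nat -> nat) (hc : forall n, (1 <= c n)%N) (z : cantor) : prodc c :=
  fun n => widen_ord (code_le hc n) (code (trunc_log 2 (c n)) z).
Arguments Fz {c}.

Lemma Fz_eq (c : nat -> nat) (hc : forall n, (1 <= c n)%N) (z w : cantor) n :
  (forall i, (i < trunc_log 2 (c n))%N -> z i = w i) -> Fz hc z n = Fz hc w n.
Proof.
move=> H; apply: val_inj => /=; rewrite /code.
suff -> : [ffun i : 'I_(trunc_log 2 (c n)) => z i] = [ffun i : 'I_(trunc_log 2 (c n)) => w i] by [].
by apply/ffunP => i; rewrite !ffunE H // ltn_ord.
Qed.

Lemma Fz_inj (c : nat -> nat) (hc : forall n, (1 <= c n)%N) (z w : cantor) n :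
  Fz hc z n = Fz hc w n -> forall i, (i < trunc_log 2 (c n))%N -> z i = w i.
Proof.
move=> /(congr1 val) /= /val_inj /enum_rank_inj /ffunP H i im.
by have := H (Ordinal im); rewrite !ffunE.
Qed.

Lemma sum_recr (h : nat -> nat) n : (\sum_(i < n.+1) h i = \sum_(i < n) h i + h n)%N.
Proof. by rewrite big_ord_recr. Qed.

Lemma sum_mono (h : nat -> nat) m n : (m <= n)%N ->
  (\sum_(i < m) h i <= \sum_(i < n) h i)%N.
Proof.
elim: n => [|n IH]; first by rewrite leqn0 => /eqP ->.
rewrite leq_eqVlt => /orP [/eqP -> //| ]; rewrite ltnS => /IH H.
by rewrite sum_recr (leq_trans H) // leq_addr.
Qed.

Lemma block_of_start (h : nat -> nat) n j : (j < h n)%N ->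
  block_of h (\sum_(i < n) h i + j) = n.
Proof.
move=> jn; rewrite /block_of; case: pselect => [H|H]; last first.
  by exfalso; apply: H; exists n; rewrite sum_recr ltn_add2l.
case: ex_minnP => k Hk Hmin.
apply/eqP; rewrite eqn_leq; apply/andP; split.
  by apply: Hmin; rewrite sum_recr ltn_add2l.
rewrite leqNgt; apply/negP => kn.
have := leq_trans Hk (leq_trans (@sum_mono h _ _ kn) (leq_addr j _)).
by rewrite ltnn.
Qed.

Lemma key_bound (R : realType) (e c h : nat -> nat) :
  (forall n, (1 <= n)%N ->
     2 * (ln (n%:R : R) / ln 2) <= (e (gch c h n))%:R) ->
  forall k, (1 <= k)%N -> (k ^ 2 <= 2 ^ e (gch c h k))%N.
Proof.
move=> H k k1; have := H k k1; move: (e (gch c h k)) => E HE.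
have l2 : 0 < ln (2 : R) by rewrite ln_gt0 // ltr1n.
have k0 : 0 < (k%:R : R) by rewrite ltr0n.
rewrite -(ler_nat R) !natrX.
have HH : ln (k%:R ^+ 2) <= ln ((2 : R) ^+ E).
  rewrite (lnXn 2 k0) (lnXn E (ltr0Sn _ 1)).
  rewrite -[_ *+ 2]mulr_natl -[_ *+ E]mulr_natl.
  by rewrite mulrA ler_pdivrMr // in HE.
have p1 : (k%:R : R) ^+ 2 \is Num.pos by rewrite posrE exprn_gt0.
have p2 : (2 : R) ^+ E \is Num.pos by rewrite posrE exprn_gt0.
by rewrite (ler_ln p1 p2) in HH.
Qed.

Definition tK (R : realType) (K k : nat) : R :=
  if (K <= k)%N then ((k%:R : R) ^+ 2)^-1 else 0.

Lemma tK_ge0 (R : realType) K k : 0 <= tK R K k.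
Proof. by rewrite /tK; case: ifP => // _; rewrite invr_ge0 exprn_ge0. Qed.

Lemma tsum_bound (R : realType) K : (2 <= K)%N -> forall N,
  \sum_(0 <= k < N) tK R K k <= ((K.-1)%:R)^-1 - (((maxn N K).-1)%:R)^-1.
Proof.
move=> K2; elim=> [|N IH].
  by rewrite big_geq // max0n subrr.
move: IH; rewrite big_nat_recr //= /tK; case: leqP => KN.
  have -> : maxn N.+1 K = N.+1 by apply/maxn_idPl; rewrite (leq_trans KN).
  move=> IH.
  have N2 : (2 <= N)%N by rewrite (leq_trans K2).
  suff HN : ((N%:R : R) ^+ 2)^-1 <= ((N.-1)%:R)^-1 - (N%:R)^-1.
    by move: (lerD IH HN); rewrite addrA subrK.
  have -> : (N.-1)%:R = (N%:R : R) - 1.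
    by rewrite -subn1 natrB // (leq_trans _ N2).
  have a2 : (2 : R) <= N%:R by rewrite ler_nat.
  rewrite -subr_ge0.
  have -> : ((N%:R : R) - 1)^-1 - (N%:R)^-1 - ((N%:R : R) ^+ 2)^-1
      = ((N%:R : R) ^+ 2 * (N%:R - 1))^-1.
    field; apply/andP; split; apply/eqP; lra.
  by rewrite invr_ge0 mulr_ge0 ?exprn_ge0 //; lra.
have -> : maxn N.+1 K = K by apply/maxn_idPr.
by rewrite addr0 /tK.
Qed.

Lemma tseries_bound (R : realType) K : (2 <= K)%N ->
  (\sum_(0 <= k <oo) (tK R K k)%:E <= (((K.-1)%:R : R)^-1)%:E)%E.
Proof.
move=> K2; apply: lime_le.
  by apply: is_cvg_nneseries => n _ _; rewrite lee_fin tK_ge0.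
apply: nearW => N; rewrite sumEFin lee_fin.
apply: le_trans (@tsum_bound R K K2 N) _.
have : 0 <= (((maxn N K).-1)%:R : R)^-1 by rewrite invr_ge0 ler0n.
lra.
Qed.

Lemma exists_p2_le (R : realType) (d : R) : 0 < d -> exists M, (2%:R : R) ^- M <= d.
Proof.
move=> d0; have dinv0 : 0 <= d^-1 by rewrite invr_ge0 ltW.
exists (Num.Def.archi_bound d^-1).
set k := Num.Def.archi_bound d^-1.
have hk := archi_boundP dinv0.
rewrite -[X in _ <= X]invrK p2E lef_pV2 ?posrE ?invr_gt0 ?ltr0n ?expn_gt0 //.
apply: (le_trans (ltW hk)); rewrite ler_nat.
by apply: ltnW; apply: (ltn_expl k (isT : 1 < 2)%N).
Qed.

Lemma main_null (R : realType) (e c h : nat -> nat)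
  (he : {homo e : m n / (m <= n)%N}) (hc : forall n, (1 <= c n)%N)
  (hcov : forall k, exists n, (k < \sum_(i < n.+1) h i)%N)
  (hkey : forall k, (1 <= k)%N -> (k ^ 2 <= 2 ^ e (gch c h k))%N)
  (phi : slalom c) (hphi : in_S h phi) (A : set cantor) :
  (forall z, A z -> inf_often_in (Fz hc z) phi) -> hnull (@estar R e) A.
Proof.
move=> hA.
have hd : forall d : R, 0 < d -> hausdorff_delta (@estar R e) d A = 0%E.
  move=> d d0; apply/eqP; rewrite eq_le; apply/andP; split; last first.
    apply/ereal_infP => y [C _ <-].
    by apply: nneseries_ge0 => n _ _; rewrite lee_fin estar_ge0.
  apply/lee_addgt0Pr => eps eps0; rewrite add0e.
  have [M hM] := @exists_p2_le R d d0.
  have epsinv0 : 0 <= eps^-1 by rewrite invr_ge0 ltW.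
  pose K := maxn (2 ^ e M).+1 (Num.Def.archi_bound eps^-1).+2.
  have K2 : (2 <= K)%N by rewrite /K leq_max; apply/orP; right.
  have KeM : (2 ^ e M < K)%N by rewrite /K leq_max leqnn.
  have Keps : (((K.-1)%:R : R)^-1) <= eps.
    rewrite -[X in _ <= X]invrK lef_pV2 ?posrE ?invr_gt0 ?ltr0n //; last first.
      by rewrite -ltnS prednK // ltnW.
    apply: (le_trans (ltW (archi_boundP epsinv0))); rewrite ler_nat.
    by rewrite -ltnS (prednK (ltnW K2)) /K leq_max; apply/orP; right.
  have gbig : forall k, (K <= k)%N -> (M < gch c h k)%N.
    move=> k Kk; rewrite ltnNge; apply/negP => gM.
    have k1 : (1 <= k)%N by rewrite (leq_trans _ Kk) // (leq_trans _ K2).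
    have := hkey k k1.
    have : (2 ^ e (gch c h k) <= 2 ^ e M)%N by rewrite leq_exp2l // he.
    move=> h1 h2; have := leq_trans h2 h1.
    rewrite -mulnn => h3; have := leq_trans (leq_pmulr k k1) h3.
    by move=> h4; have := leq_trans KeM (leq_trans Kk h4); rewrite ltnn.
  have [n0 hn0] := hcov K.
  pose C : nat -> set cantor := fun k => [set z | (K <= k)%N /\
     Fz hc z (block_of h k) \in phi (block_of h k) /\
     index (Fz hc z (block_of h k)) (enum (phi (block_of h k)))
       = (k - \sum_(i < block_of h k) h i)%N].
  have Cagree : forall k x y, C k x -> C k y ->
      forall i, (i < gch c h k)%N -> x i = y i.
    move=> k x y [_ [xin xi]] [_ [yin yi]].
    rewrite -mem_enum in xin; rewrite -mem_enum in yin.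
    apply: Fz_inj; rewrite -(nth_index (Fz hc x (block_of h k)) xin).
    by rewrite xi -yi nth_index.
  have Cflip : forall k x, C k x -> C k (flip x (gch c h k)).
    move=> k x; rewrite /C /=.
    rewrite (@Fz_eq c hc (flip x (gch c h k)) x (block_of h k)) //.
    by move=> i im; rewrite /flip; case: eqP => // ei; move: im; rewrite ei ltnn.
  have Cdiam : forall k, C k !=set0 -> cdiam R (C k) = 2%:R ^- gch c h k.
    by move=> k ne; apply: cdiam_cyl => //; [apply: Cagree|apply: Cflip].
  have Cempty : forall k, ~ (C k !=set0) -> cdiam R (C k) = 0.
    by move=> k ne; apply: cdiam_empty => x Cx; apply: ne; exists x.
  apply: (@le_trans _ _ (\sum_(0 <= k <oo) (estar e (cdiam R (C k)))%:E)%E).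
    apply: ereal_inf_lbound.
    exists C => //; split.
      move=> z Az; have [n [n0n Fin]] := hA z Az n0.+1.
      set j := index (Fz hc z n) (enum (phi n)).
      have jlt : (j < h n)%N.
        by apply: leq_trans (hphi n); rewrite cardE index_mem mem_enum.
      exists (\sum_(i < n) h i + j)%N => //.
      rewrite /C /= block_of_start // addKn; split => //.
      apply: leq_trans (leq_addr _ _).
      by apply: ltnW; apply: (leq_trans hn0); apply: sum_mono.
    move=> k; case: (pselect (C k !=set0)) => [ne|ne]; last first.
      by rewrite Cempty // ltW.
    rewrite Cdiam //; apply: le_trans hM; rewrite p2_le ltnW // gbig //.
    by case: ne => x [].
  apply: (le_trans _ (le_trans (@tseries_bound R K K2) _)); last by rewrite lee_fin.
  apply: lee_nneseries => k _; first by rewrite lee_fin estar_ge0.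
  rewrite lee_fin; case: (pselect (C k !=set0)) => [ne|ne]; last first.
    by rewrite Cempty // /estar lexx tK_ge0.
  have Kk : (K <= k)%N by case: ne => x [].
  rewrite Cdiam // estar_p2 /tK Kk p2E lef_pV2 ?posrE ?exprn_gt0 ?ltr0n ?expn_gt0 //.
    by rewrite -natrX ler_nat hkey // (leq_trans _ Kk) // (leq_trans _ K2).
  by rewrite (leq_trans _ Kk) // (leq_trans _ K2).
rewrite /hnull /hausdorff.
apply: (lim_near_cst (@ereal_hausdorff R)).
have := nbhs_right_gt (0 : R); apply: filterS => d; exact: hd.
Qed.

Theorem lemma3p4 (R : realType) (e c h : nat -> nat) :
  {homo e : m n / (m <= n)%N} ->
  (forall M, exists n, (M <= e n)%N) ->
  (forall n, (1 <= c n)%N) ->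
  (* the intervals I_n (|I_n| = h n) partition omega *)
  (forall k, exists n, (k < \sum_(i < n.+1) h i)%N) ->
  (forall n, (1 <= n)%N ->
     2 * (ln (n%:R : R) / ln 2) <= (e (gch c h n))%:R) ->
  (* v^exists_{c,h} <= non(N^{e^*}) *)
  (forall Y : set cantor, ~ hnull (@estar R e) Y ->
     exists F : cantor -> prodc c,
       forall phi : slalom c, in_S h phi ->
         exists y, Y y /\ ~ inf_often_in (F y) phi) /\
  (* cov(N^{e^*}) <= c^exists_{c,h} *)
  (forall Phi : set (slalom c),
     (forall phi, Phi phi -> in_S h phi) ->
     (forall x : prodc c, exists phi, Phi phi /\ inf_often_in x phi) ->
     exists N : slalom c -> set cantor,
       (forall phi, Phi phi -> hnull (@estar R e) (N phi)) /\
       (forall z : cantor, exists phi, Phi phi /\ N phi z)).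
Proof.
move=> he _ hc hcov hlog.
have hkey := @key_bound R e c h hlog.
split.
  move=> Y hY; exists (Fz hc) => phi hphi.
  case: (pselect (exists y, Y y /\ ~ inf_often_in (Fz hc y) phi)) => // hno.
  exfalso; apply: hY.
  apply: (@main_null R e c h he hc hcov hkey phi hphi Y) => z Yz.
  case: (pselect (inf_often_in (Fz hc z) phi)) => // ni.
  by exfalso; apply: hno; exists z.
move=> Phi hPhi hcovP.
exists (fun phi => [set z | inf_often_in (Fz hc z) phi]); split.
  move=> phi Pphi.
  by apply: (@main_null R e c h he hc hcov hkey phi (hPhi phi Pphi)).
move=> z; have [phi [Pphi hz]] := hcovP (Fz hc z).
by exists phi.
Qed.
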